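(* Let $0\le r\le n$, let $A\in\mathcal{A}_{n+1,r+1}$ with $|\mathrm{lrs}(A)|=i$ and $|\mathrm{rls}(A)|=j$, fix any tiling of the rhombic diagram $\Gamma(X(A))$, and let $T(A)$ be the filling obtained by applying the fusion-exchange algorithm to $A$. Then $\mathrm{wt}(T(A))=\alpha^{n-r-i}\beta^{n-r-j}$ at $q=1$.
   Context: Words and diagrams. For $0\le r\le n$ let $B_n^r$ be the set of words $X\in\{H,L,0\}^n$ with exactly $r$ letters $L$. If $X$ has $k$ letters $H$, $r$ letters $L$ and $\ell$ letters $0$, its rhombic diagram $\Gamma(X)$ is the closed region bounded by two paths of unit steps, using the directions west (horizontal), south (vertical) and southwest (diagonal: a fixed unit vector strictly between west and south), both going from a point $P$ to a point $Q$: the northwest boundary consists of $\ell$ west steps, then $r$ southwest steps, then $k$ south steps; the southeast boundary is obtained by reading $X$ left to right and taking a west step for each $0$, a southwest step for each $L$, a south step for each $H$. A tiling of $\Gamma(X)$ is a tiling by unit rhombi of three kinds: squares (horizontal and vertical edges), tall rhombi (vertical and diagonal edges), short rhombi (horizontal and diagonal edges). A west-strip (resp. north-strip, northwest-strip) is a maximal set of tiles connected through shared vertical (resp. horizontal, diagonal) edges; each runs from an edge of the southeast boundary to an edge of the northwest boundary, and each edge of the tiling lies in exactly one strip, of the type of its direction. Each tile has two edges on its lower-right side: its east edge (vertical for squares and tall rhombi, diagonal for short rhombi) and its south edge (horizontal for squares and short rhombi, diagonal for tall rhombi); the parallel edges on its upper-left side are its west and north edges. Weight. For a filling $T$ of the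 tiles of a tiling of $\Gamma(X)$ by symbols $\alpha,\beta,q$ (tiles may be empty), $\mathrm{wt}(T)=\alpha^k\beta^\ell\cdot(\text{product of all symbols in }T)$, with $k,\ell$ the numbers of $H$'s and $0$'s in $X$. Assemblées. An assemblée of size $(m,s)$ is a collection of $s$ nonempty, pairwise disjoint, linearly ordered sets (blocks) with union $\{1,\dots,m\}$; the last element of a block is its block-end. Blocks are listed in the canonical order with decreasing block-ends, and the assemblée is identified with the concatenated word. $\mathcal{A}_{m,s}$ is the set of these. For $A\in\mathcal{A}_{n+1,r+1}$ with block-ends $b_1>\dots>b_{r+1}$: $\mathrm{lrs}(A)$ is the set of $x>b_1$ larger than every element $y>b_1$ to the right of $x$ in $A$; $\mathrm{rls}(A)$ is the set of $x<b_{r+1}$ larger than every $y<b_{r+1}$ to the left of $x$ in $A$. A non-block-end element $x$ is an increase if $x+1$ appears to the right of $x$ in $A$, and a decrease otherwise (so $n+1$, if not a block-end, is a decrease). $X(A)\in B_n^r$ is obtained from $A$ by deleting its last letter $b_{r+1}$ and replacing each increase by $H$, each decrease by $0$ and each remaining block-end by $L$. Fusion-exchange algorithm. A label is a finite, possibly empty, set of consecutive integers; for labels $E,S$ write $E\succ S$ if both are nonempty and $\min E=\max S+1$. Given $A\in\mathcal{A}_{n+1,r+1}$ and a tiling of $\Gamma(X(A))$: initially the southeast boundary edges, in order from $P$ to $Q$, receive the singleton labels of the letters of $A$ from left to right, $b_{r+1}$ omitted. Step: choose a tile whose east and south edges are labeled, say by $E$ and $S$, and whose west and north edges are not. (R I)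 If $E\succ S$ and the south edge is horizontal: west edge gets $E\cup S$, north edge gets $\emptyset$, place $\alpha$ in the tile. (R II) If $S\succ E$ and the east edge is vertical: north edge gets $E\cup S$, west edge gets $\emptyset$, place $\beta$. (R III) Otherwise: west edge gets $E$, north edge gets $S$, and place $q$ if $E\ne\emptyset$ and $S\ne\emptyset$ (else leave the tile empty). Repeat until every edge is labeled; $T(A)$ is the resulting filling. *)

(* Defs.v *)
From HB Require Import structures.
From mathcomp Require Import all_boot all_order all_algebra.
Set Implicit Arguments. Unset Strict Implicit. Unset Printing Implicit Defensive.

Inductive letter := LH | LL | L0.

Definition letter_eqb (a b : letter) : bool :=
  match a, b with LH, LH | LL, LL | L0, L0 => true | _, _ => false end.
Lemma letter_eqP : Equality.axiom letter_eqb.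
Proof. by case; case; constructor. Qed.
HB.instance Definition _ := hasDecEq.Build letter letter_eqP.

(* Order of the directions along the northwest boundary: 0 (west) first,
   then L (southwest), then H (south). *)
Definition lrank (a : letter) : nat := match a with L0 => 0 | LL => 1 | LH => 2 end.

(* An assemblee of size (m,s), listed in canonical order, is represented by
   the list of its blocks (each block a list, in its linear order). *)
Definition block_ends (A : seq (seq nat)) : seq nat := map (last 0) A.

Definition is_assemblee (m s : nat) (A : seq (seq nat)) : bool :=
  [&& size A == s, all (fun b => b != [::]) A,
      perm_eq (flatten A) (iota 1 m)
    & sorted (fun a b => b < a) (block_ends A)].

Definition aword (A : seq (seq nat)) : seq nat := flatten A.
Definition bfirst (A : seq (seq nat)) : nat := head 0 (block_ends A).
Definition blast (A : seq (seq nat)) : nat := last 0 (block_ends A).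

Definition lrs (A : seq (seq nat)) : seq nat :=
  let w := aword A in
  [seq nth 0 w p | p <- iota 0 (size w) &
     (bfirst A < nth 0 w p) &&
     all (fun y => (bfirst A < y) ==> (y < nth 0 w p)) (drop p.+1 w)].

Definition rls (A : seq (seq nat)) : seq nat :=
  let w := aword A in
  [seq nth 0 w p | p <- iota 0 (size w) &
     (nth 0 w p < blast A) &&
     all (fun y => (y < blast A) ==> (y < nth 0 w p)) (take p w)].

Definition is_block_end (A : seq (seq nat)) (x : nat) : bool :=
  x \in block_ends A.

Definition is_increase (A : seq (seq nat)) (x : nat) : bool :=
  ~~ is_block_end A x && (x.+1 \in drop (index x (aword A)).+1 (aword A)).

Definition letter_of (A : seq (seq nat)) (x : nat) : letter :=
  if is_block_end A x then LL else if is_increase A x then LH else L0.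

Definition aword_trunc (A : seq (seq nat)) : seq nat :=
  take (size (aword A)).-1 (aword A).

Definition XA (A : seq (seq nat)) : seq letter := map (letter_of A) (aword_trunc A).

(* The boundary paths from P to Q are encoded by words (0 = west step,
   L = southwest step, H = south step).  A tile whose east and south edges
   are consecutive edges p, p+1 of the current path (read from P) has
   east-edge direction x = w_p and south-edge direction y = w_{p+1} with
   lrank x > lrank y (square: x=H,y=0; tall rhombus: x=H,y=L;
   short rhombus: x=L,y=0).  Adding it replaces x y by y x (north edge, then
   west edge).  A tiling of Gamma(X) is encoded by an order in which its
   tiles can be added, starting from the southeast boundary X, until the
   northwest boundary 0^l L^r H^k is reached. *)
Definition tile_ok (w : seq letter) (p : nat) : bool :=
  (p.+1 < size w) && (lrank (nth L0 w p.+1) < lrank (nth L0 w p)).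

Definition swap_at (T : Type) (d : T) (w : seq T) (p : nat) : seq T :=
  set_nth d (set_nth d w p (nth d w p.+1)) p.+1 (nth d w p).

Fixpoint apply_tiles (w : seq letter) (s : seq nat) : option (seq letter) :=
  match s with
  | [::] => Some w
  | p :: s' => if tile_ok w p then apply_tiles (swap_at L0 w p) s' else None
  end.

Definition nw_word (X : seq letter) : seq letter :=
  nseq (count_mem L0 X) L0 ++ nseq (count_mem LL X) LL ++ nseq (count_mem LH X) LH.

Definition is_tiling (X : seq letter) (s : seq nat) : bool :=
  apply_tiles X s == Some (nw_word X).

Definition label := seq nat. (* a finite set of consecutive integers *)

Definition lmin (E : label) : nat := foldr minn (head 0 E) E.
Definition lmax (E : label) : nat := foldr maxn 0 E.
Definition lsucc (E S : label) : bool :=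
  [&& E != [::], S != [::] & lmin E == (lmax S).+1].

Inductive sym := SAlpha | SBeta | SQ.
Definition sym_eqb (a b : sym) : bool :=
  match a, b with SAlpha, SAlpha | SBeta, SBeta | SQ, SQ => true | _, _ => false end.
Lemma sym_eqP : Equality.axiom sym_eqb.
Proof. by case; case; constructor. Qed.
HB.instance Definition _ := hasDecEq.Build sym sym_eqP.

(* x = direction of the east edge, y = direction of the south edge,
   E, S their labels; returns (west label, north label, tile content) *)
Definition fe_rule (x y : letter) (E S : label) : label * label * option sym :=
  if (y == L0) && lsucc E S then (E ++ S, [::], Some SAlpha)
  else if (x == LH) && lsucc S E then ([::], E ++ S, Some SBeta)
  else (E, S, if (E != [::]) && (S != [::]) then Some SQ else None).

(* Runs the algorithm, processing the tiles in the order s; returns the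
   filling as the list of tile contents (one entry per tile). *)
Fixpoint fe_fill (w : seq letter) (lab : seq label) (s : seq nat)
  : seq (option sym) :=
  match s with
  | [::] => [::]
  | p :: s' =>
    let x := nth L0 w p in let y := nth L0 w p.+1 in
    let E := nth [::] lab p in let S := nth [::] lab p.+1 in
    let '(west, north, c) := fe_rule x y E S in
    let w' := swap_at L0 w p in
    let lab' := set_nth [::] (set_nth [::] lab p north) p.+1 west in
    c :: fe_fill w' lab' s'
  end.

Definition init_labels (A : seq (seq nat)) : seq label :=
  map (fun x => [:: x]) (aword_trunc A).

Definition TA (A : seq (seq nat)) (s : seq nat) : seq (option sym) :=
  fe_fill (XA A) (init_labels A) s.

(* wt(T) = alpha^a beta^b q^c is encoded by its exponent triple (a,b,c). *)
Definition wt (X : seq letter) (T : seq (option sym)) : nat * nat * nat :=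
  (count_mem LH X + count_mem (Some SAlpha) T,
   count_mem L0 X + count_mem (Some SBeta) T,
   count_mem (Some SQ) T).

(* specialization q = 1: the monomial alpha^a beta^b, as the pair (a,b) *)
Definition wt_q1 (X : seq letter) (T : seq (option sym)) : int * int :=
  (Posz (wt X T).1.1, Posz (wt X T).1.2).

(* Main.v *)
Require Import Defs.
From mathcomp Require Import all_boot all_order all_algebra.
From mathcomp Require Import zify.
Set Implicit Arguments. Unset Strict Implicit. Unset Printing Implicit Defensive.

Lemma lmax_ge (I : label) v : v \in I -> v <= lmax I.
Proof.
elim: I => //= a I IH; rewrite in_cons => /orP [/eqP->|/IH h].
  by rewrite leq_maxl.
by rewrite (leq_trans h) // leq_maxr.
Qed.

Lemma lmax_mem (I : label) : I != [::] -> lmax I \in I.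
Proof.
elim: I => //= a I IH _; rewrite in_cons.
change (lmax (a :: I)) with (maxn a (lmax I)).
case: I IH => [|b I] IH; first by rewrite maxn0 eqxx.
have h : lmax (b :: I) \in b :: I by apply: IH.
case: (leqP a (lmax (b :: I))) => h2.
  by rewrite h orbT.
by rewrite eqxx.
Qed.

Lemma lmax_nil : lmax [::] = 0. Proof. by []. Qed.

Lemma lmax_cat (E S : label) : lmax (E ++ S) = maxn (lmax E) (lmax S).
Proof. by elim: E => [|a E IH] /=; [rewrite max0n|rewrite /lmax /= -/(lmax _) IH maxnA]. Qed.

Lemma foldr_minn_le d (I : seq nat) v : v \in d :: I -> foldr minn d I <= v.
Proof.
elim: I v => [|a I IH] v /=; first by rewrite inE => /eqP->.
rewrite !inE => /orP [/eqP->|/orP [/eqP->|h]].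
- apply: leq_trans (geq_minr _ _) _; apply: IH; by rewrite inE eqxx.
- by rewrite geq_minl.
- apply: leq_trans (geq_minr _ _) _; apply: IH; by rewrite inE h orbT.
Qed.

Lemma foldr_minn_mem d (I : seq nat) : foldr minn d I \in d :: I.
Proof.
elim: I => [|a I IH] /=; first by rewrite inE.
rewrite !inE; case: (leqP a (foldr minn d I)) => h.
  by rewrite eqxx orbT.
move: IH; rewrite inE => /orP [->|->] //.
by rewrite !orbT.
Qed.

Lemma lmin_le (I : label) v : v \in I -> lmin I <= v.
Proof.
case: I => [|a I] //= h; apply: foldr_minn_le; by rewrite inE h orbT.
Qed.

Lemma lmin_mem (I : label) : I != [::] -> lmin I \in I.
Proof.
case: I => [|a I] //= _; have := foldr_minn_mem a (a :: I).
by rewrite /lmin /= inE => /orP [/eqP->|]; rewrite ?inE ?eqxx.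
Qed.

Lemma lmin_char (I : label) m : m \in I -> (forall v, v \in I -> m <= v) -> lmin I = m.
Proof.
move=> hm hv; apply/eqP; rewrite eqn_leq lmin_le //=.
apply: hv; apply: lmin_mem; by case: I hm.
Qed.

Lemma lmax_char (I : label) m : m \in I -> (forall v, v \in I -> v <= m) -> lmax I = m.
Proof.
move=> hm hv; apply/eqP; rewrite eqn_leq lmax_ge // andbT.
apply: hv; apply: lmax_mem; by case: I hm.
Qed.

Definition intv (I : label) :=
  I != [::] -> forall v, (v \in I) = (lmin I <= v <= lmax I).

Lemma merge_int (lo hi X : label) :
  lo != [::] -> hi != [::] -> intv lo -> intv hi ->
  lmin hi = (lmax lo).+1 ->
  (forall v, (v \in X) = (v \in lo) || (v \in hi)) ->
  [/\ lmin X = lmin lo, lmax X = lmax hi & intv X].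
Proof.
move=> nlo nhi ilo ihi hm hX.
have l1 := lmin_le (lmax_mem nlo); have l2 := lmin_le (lmax_mem nhi).
have emin : lmin X = lmin lo.
  apply: lmin_char; first by rewrite hX lmin_mem.
  move=> v; rewrite hX => /orP [/lmin_le //|]; rewrite ihi // hm => /andP [h _].
  lia.
have emax : lmax X = lmax hi.
  apply: lmax_char; first by rewrite hX lmax_mem ?orbT.
  move=> v; rewrite hX => /orP [|/lmax_ge //]; rewrite ilo // => /andP [_ h].
  lia.
split => // _ v; rewrite hX ilo // ihi // emin emax hm.
apply/idP/idP.
  case/orP => /andP [h1 h2]; apply/andP; split; lia.
move=> /andP [h1 h2]; apply/orP; case: (leqP v (lmax lo)) => h3;
  [left|right]; apply/andP; split; lia.
Qed.

Definition AP (g : nat -> bool) m (X : seq label) :=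
  all (fun J => g (lmax J) ==> (lmax J < m)) X.

Fixpoint Phi (g : nat -> bool) (X : seq label) : nat :=
  match X with
  | [::] => 0
  | J :: X' => (g (lmax J) && AP g (lmax J) X') + Phi g X'
  end.

Lemma AP_cat g m X Y : AP g m (X ++ Y) = AP g m X && AP g m Y.
Proof. by rewrite /AP all_cat. Qed.

Lemma Phi_cat_eq g pre X X' :
  (forall m, AP g m X = AP g m X') -> Phi g X = Phi g X' ->
  Phi g (pre ++ X) = Phi g (pre ++ X').
Proof.
move=> hA hP; elim: pre => [|I pre IH] //=.
by rewrite IH !AP_cat hA.
Qed.

Lemma AP_false (g : nat -> bool) m X v : v \in flatten X ->
  (forall J, J \in X -> v \in J -> g (lmax J) /\ m <= lmax J) -> AP g m X = false.
Proof.
move=> /flattenP [J hJ hv] h; apply/negbTE; apply/allPn; exists J => //.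
have [h1 h2] := h J hJ hv; by rewrite h1 /= -leqNgt.
Qed.

Definition Csucc (tau : nat -> letter) (t : seq nat) (pre : seq nat) (I : label)
  (post : seq nat) : Prop :=
  I != [::] -> (lmax I).+1 \in t ->
  (tau (lmax I) = L0 -> (lmax I).+1 \in pre) /\
  (tau (lmax I) = LH -> (lmax I).+1 \in post).

Fixpoint succ_ok tau t (pre : seq nat) (lab : seq label) : Prop :=
  match lab with
  | [::] => True
  | J :: post => Csucc tau t pre J (flatten post) /\ succ_ok tau t (pre ++ J) post
  end.

Lemma Csucc_ext tau t pre pre' I post post' :
  pre =i pre' -> post =i post' -> Csucc tau t pre I post -> Csucc tau t pre' I post'.
Proof.
move=> h1 h2 h nI ht; have [a b] := h nI ht.
by split=> [/a|/b]; rewrite ?h1 ?h2.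
Qed.

Lemma succ_ok_ext tau t pre pre' X :
  pre =i pre' -> succ_ok tau t pre X -> succ_ok tau t pre' X.
Proof.
elim: X pre pre' => [|I X IH] pre pre' /=; first by [].
move=> h [h1 h2]; split.
  exact: Csucc_ext h1.
apply: IH h2 => v; by rewrite !mem_cat h.
Qed.

Lemma succ_ok_drop tau t pre Q X :
  succ_ok tau t pre (Q ++ X) -> succ_ok tau t (pre ++ flatten Q) X.
Proof.
elim: Q pre => [|I Q IH] pre /=; first by rewrite cats0.
move=> [_ h]; rewrite catA; exact: IH.
Qed.

Lemma succ_ok_replace tau t pre Q X X' :
  succ_ok tau t pre (Q ++ X) ->
  (succ_ok tau t (pre ++ flatten Q) X -> succ_ok tau t (pre ++ flatten Q) X') ->
  flatten X =i flatten X' -> succ_ok tau t pre (Q ++ X').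
Proof.
elim: Q pre => [|I Q IH] pre /=.
  by move=> h1; rewrite cats0 => h2 _; apply: h2.
move=> [h1 h2] h3 h4; split.
  apply: Csucc_ext h1 => // v; by rewrite !flatten_cat !mem_cat h4.
apply: IH => //; by rewrite -catA.
Qed.

Lemma succ_ok_nth tau t pre lab q : succ_ok tau t pre lab -> q < size lab ->
  Csucc tau t (pre ++ flatten (take q lab)) (nth [::] lab q) (flatten (drop q.+1 lab)).
Proof.
elim: lab pre q => [|I lab IH] pre [|q] //= [h1 h2] hq /=.
  apply: Csucc_ext h1 => v; by rewrite ?cats0 ?drop0.
apply: Csucc_ext (IH _ _ h2 hq) => v; by rewrite -?catA.
Qed.

Lemma succ_ok_of_nth tau t pre lab :
  (forall q, q < size lab ->
    Csucc tau t (pre ++ flatten (take q lab)) (nth [::] lab q) (flatten (drop q.+1 lab))) ->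
  succ_ok tau t pre lab.
Proof.
elim: lab pre => [|I lab IH] pre /= h; first by []. split.
  apply: Csucc_ext (h 0 isT) => v; by rewrite /= ?cats0 ?drop0.
apply: IH => q hq; apply: Csucc_ext (h q.+1 hq) => v; by rewrite /= ?catA.
Qed.

Definition letok (tau : nat -> letter) (pr : letter * label) :=
  (pr.2 != [::]) ==> (pr.1 == tau (lmax pr.2)).

Record Inv tau t (w : seq letter) (lab : seq label) : Prop := {
  i_size : size w = size lab;
  i_perm : perm_eq (flatten lab) t;
  i_int : forall I, I \in lab -> intv I;
  i_let : all (letok tau) (zip w lab);
  i_nonL : forall I, I \in lab -> forall v, v \in I -> v != lmax I -> tau v != LL;
  i_succ : succ_ok tau t [::] lab }.

Definition Zc (c : letter) (w : seq letter) (lab : seq label) :=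
  count (fun pr => (pr.1 == c) && (pr.2 != [::])) (zip w lab).

Record Hyps tau t (b1 B : nat) : Prop := {
  h_uniq : uniq t;
  h_pos : forall v, v \in t -> 0 < v;
  h_B : B \notin t;
  h_b1L : forall v, v \in t -> b1 < v -> tau v != LL;
  h_BL : forall v, v \in t -> v < B -> tau v != LL;
  h_Hs1 : forall v, v \in t -> b1 < v -> tau v = LH -> v.+1 \in t;
  h_0s2 : forall v, v \in t -> v < B -> tau v = L0 -> v.+1 \in t;
  h_b1 : b1 \in t -> tau b1 = LL;
  h_Hs : forall v, v \in t -> tau v = LH -> v.+1 \in t \/ v.+1 = B;
  h_0top : forall v, v \in t -> tau v = L0 -> v.+1 \notin t ->
     b1 < v /\ forall u, u \in t -> u <= v }.

Definition g1 (b1 : nat) := fun v => b1 < v.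
Definition g2 (B : nat) := fun v => (0 < v) && (v < B).

Lemma adj (S : label) v : intv S -> v.+1 \in S -> v \notin S -> lmin S = v.+1.
Proof.
move=> iS h1 h2; have nS : S != [::] by apply/eqP => e; rewrite e in h1.
move: (h1) (h2); rewrite !iS // => /andP [a b] c.
apply/eqP; rewrite eqn_leq a /= ltnNge; apply/negP => d.
by move: c; rewrite d /= (leq_trans (leqnSn v) b).
Qed.

Lemma fe_rule_cases x y (E S W N : label) c : fe_rule x y E S = (W, N, c) ->
  [/\ y = L0, lsucc E S, W = E ++ S, N = [::] & c = Some SAlpha] \/
  [/\ x = LH, lsucc S E, W = [::], N = E ++ S & c = Some SBeta] \/
  [/\ ~~ ((y == L0) && lsucc E S), ~~ ((x == LH) && lsucc S E), W = E, N = S &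
      c = if (E != [::]) && (S != [::]) then Some SQ else None].
Proof.
rewrite /fe_rule.
case h1: ((y == L0) && lsucc E S).
  move: h1 => /andP [/eqP -> h] [<- <- <-]; by left.
case h2: ((x == LH) && lsucc S E).
  move: h2 => /andP [/eqP -> h] [<- <- <-]; by right; left.
move=> [<- <- <-]; right; right; by split.
Qed.

Record Loc tau t (lpre : seq label) (x y : letter) (E S : label) (lpost : seq label)
  : Prop := {
  l_int : forall I, I \in lpre ++ E :: S :: lpost -> intv I;
  l_t : forall I v, I \in lpre ++ E :: S :: lpost -> v \in I -> v \in t;
  l_uniq : uniq (flatten lpre ++ E ++ S ++ flatten lpost);
  l_x : E != [::] -> x = tau (lmax E);
  l_y : S != [::] -> y = tau (lmax S);
  l_nlE : forall v, v \in E -> v != lmax E -> tau v != LL;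
  l_nlS : forall v, v \in S -> v != lmax S -> tau v != LL;
  l_cE : Csucc tau t (flatten lpre) E (S ++ flatten lpost);
  l_cS : Csucc tau t (flatten lpre ++ E) S (flatten lpost);
  l_rk : lrank y < lrank x }.

Lemma uniq_dis (T : eqType) (s1 s2 : seq T) v : uniq (s1 ++ s2) -> v \in s1 -> v \in s2 -> False.
Proof.
rewrite cat_uniq => /and3P [_ /hasPn h _] h1 h2.
by move: (h v h2); rewrite /= h1.
Qed.

Section LocFacts.
End LocFacts.

Lemma loc_intE tau t lpre x y E S lpost : Loc tau t lpre x y E S lpost -> intv E.
Proof. move=> L; apply: (l_int L); by rewrite mem_cat in_cons eqxx orbT. Qed.
Lemma loc_intS tau t lpre x y E S lpost : Loc tau t lpre x y E S lpost -> intv S.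
Proof. move=> L; apply: (l_int L); by rewrite mem_cat !in_cons eqxx !orbT. Qed.
Lemma loc_tE tau t lpre x y E S lpost v : Loc tau t lpre x y E S lpost -> v \in E -> v \in t.
Proof. move=> L; apply: (l_t L); by rewrite mem_cat in_cons eqxx orbT. Qed.
Lemma loc_tS tau t lpre x y E S lpost v : Loc tau t lpre x y E S lpost -> v \in S -> v \in t.
Proof. move=> L; apply: (l_t L); by rewrite mem_cat !in_cons eqxx !orbT. Qed.
Lemma loc_tpost tau t lpre x y E S lpost J v : Loc tau t lpre x y E S lpost ->
  J \in lpost -> v \in J -> v \in t.
Proof. move=> L hJ; apply: (l_t L); by rewrite mem_cat !in_cons hJ !orbT. Qed.
Lemma loc_tpre tau t lpre x y E S lpost J v : Loc tau t lpre x y E S lpost ->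
  J \in lpre -> v \in J -> v \in t.
Proof. move=> L hJ; apply: (l_t L); by rewrite mem_cat hJ. Qed.
Lemma loc_intpost tau t lpre x y E S lpost J : Loc tau t lpre x y E S lpost ->
  J \in lpost -> intv J.
Proof. move=> L hJ; apply: (l_int L); by rewrite mem_cat !in_cons hJ !orbT. Qed.
Lemma loc_intpre tau t lpre x y E S lpost J : Loc tau t lpre x y E S lpost ->
  J \in lpre -> intv J.
Proof. move=> L hJ; apply: (l_int L); by rewrite mem_cat hJ. Qed.
Lemma uniq_r (T : eqType) (s1 s2 : seq T) : uniq (s1 ++ s2) -> uniq s2.
Proof. by rewrite cat_uniq => /and3P []. Qed.
Lemma uniq_l (T : eqType) (s1 s2 : seq T) : uniq (s1 ++ s2) -> uniq s1.
Proof. by rewrite cat_uniq => /and3P []. Qed.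

Lemma loc_disES tau t lpre x y E S lpost v : Loc tau t lpre x y E S lpost ->
  v \in E -> v \in S -> False.
Proof.
move=> L; have u := uniq_r (l_uniq L); rewrite catA in u.
exact: uniq_dis (uniq_l u).
Qed.
Lemma loc_disEpost tau t lpre x y E S lpost v : Loc tau t lpre x y E S lpost ->
  v \in E -> v \in flatten lpost -> False.
Proof.
move=> L h1 h2; have u := uniq_r (l_uniq L).
apply: (uniq_dis u h1); by rewrite mem_cat h2 orbT.
Qed.
Lemma loc_disSpost tau t lpre x y E S lpost v : Loc tau t lpre x y E S lpost ->
  v \in S -> v \in flatten lpost -> False.
Proof.
move=> L h1 h2; have u := uniq_r (uniq_r (l_uniq L)); exact: uniq_dis u h1 h2.
Qed.
Lemma loc_disEpre tau t lpre x y E S lpost v : Loc tau t lpre x y E S lpost ->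
  v \in E -> v \in flatten lpre -> False.
Proof.
move=> L h1 h2; have u := l_uniq L; apply: (uniq_dis u h2); by rewrite mem_cat h1.
Qed.
Lemma loc_disSpre tau t lpre x y E S lpost v : Loc tau t lpre x y E S lpost ->
  v \in S -> v \in flatten lpre -> False.
Proof.
move=> L h1 h2; have u := l_uniq L; apply: (uniq_dis u h2); by rewrite !mem_cat h1 orbT.
Qed.

Lemma nostr1 (t : seq nat) B (J : label) v : intv J -> (forall u, u \in J -> u \in t) ->
  B \notin t -> v \in J -> v < B -> lmax J < B.
Proof.
move=> iJ tJ hB hv hvB; rewrite ltnNge; apply/negP => h.
have nJ : J != [::] by apply/eqP => e; rewrite e in hv.
have : B \in J by rewrite iJ // h andbT (leq_trans (lmin_le hv)) // ltnW.
by move/tJ; rewrite (negbTE hB).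
Qed.

Lemma nostr2 (t : seq nat) B (lo hi : label) : intv hi -> (forall u, u \in hi -> u \in t) ->
  B \notin t -> hi != [::] -> lmin hi = (lmax lo).+1 -> lmax lo < B -> lmax hi < B.
Proof.
move=> ih th hB nh hm hl.
have m1 : (lmax lo).+1 \in hi by rewrite -hm lmin_mem.
apply: (nostr1 ih th hB m1); rewrite ltn_neqAle hl andbT.
apply/eqP => e; move: (th _ m1); by rewrite e (negbTE hB).
Qed.

Lemma AP2_mono (g : nat -> bool) lo hi m : lo < hi -> (g lo -> g hi) ->
  (g hi ==> (hi < m)) = (g hi ==> (hi < m)) && (g lo ==> (lo < m)).
Proof.
move=> h1 h2; case a: (g hi); case b: (g lo) => //=; rewrite ?andbT //.
  by case: ltnP => // h; rewrite (ltn_trans h1 h).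
by move: (h2 b); rewrite a.
Qed.

Lemma merge_lo_hi (lo hi : label) : lsucc hi lo -> intv lo -> intv hi ->
  [/\ lo != [::], hi != [::], lmin hi = (lmax lo).+1, lmax lo < lmax hi &
   forall X, (forall v, (v \in X) = (v \in lo) || (v \in hi)) ->
     [/\ lmin X = lmin lo, lmax X = lmax hi & intv X]].
Proof.
move=> /and3P [nh nl /eqP hm] il ih; split => //.
  by rewrite (leq_trans _ (lmin_le (lmax_mem nh))) // hm.
move=> X hX; exact: merge_int.
Qed.

Lemma loc_perm x y (E S W N : label) c : fe_rule x y E S = (W, N, c) ->
  perm_eq (N ++ W) (E ++ S).
Proof.
case/fe_rule_cases => [[_ _ -> -> _]|[[_ _ -> -> _]|[_ _ -> -> _]]].
- by rewrite cat0s.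
- by rewrite cats0.
- by rewrite perm_catC.
Qed.

Lemma memES (E S : label) v : (v \in E ++ S) = (v \in S) || (v \in E).
Proof. by rewrite mem_cat orbC. Qed.

Lemma loc_int tau t lpre x y E S lpost W N c : Loc tau t lpre x y E S lpost ->
  fe_rule x y E S = (W, N, c) -> intv N /\ intv W.
Proof.
move=> L; have iE := loc_intE L; have iS := loc_intS L.
case/fe_rule_cases => [[_ hs -> -> _]|[[_ hs -> -> _]|[_ _ -> -> _]]].
- have [_ _ _ _ h] := merge_lo_hi hs iS iE; have [_ _ i] := h _ (memES E S).
  by split.
- have [_ _ _ _ h] := merge_lo_hi hs iE iS; have [_ _ i] := h _ (fun v => mem_cat v E S).
  by split.
- by split.
Qed.

Lemma loc_let tau t lpre x y E S lpost W N c : Loc tau t lpre x y E S lpost ->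
  fe_rule x y E S = (W, N, c) -> letok tau (y, N) /\ letok tau (x, W).
Proof.
move=> L; have iE := loc_intE L; have iS := loc_intS L.
rewrite /letok /=.
case/fe_rule_cases => [[_ hs -> -> _]|[[_ hs -> -> _]|[_ _ -> -> _]]].
- have [nS nE _ _ h] := merge_lo_hi hs iS iE; have [_ mx _] := h _ (memES E S).
  by split => //; rewrite mx (l_x L nE) eqxx implybT.
- have [nE nS _ _ h] := merge_lo_hi hs iE iS; have [_ mx _] := h _ (fun v => mem_cat v E S).
  by split => //; rewrite mx (l_y L nS) eqxx implybT.
- split; apply/implyP => h; by rewrite ?(l_x L h) ?(l_y L h).
Qed.

Lemma loc_nonL tau t lpre x y E S lpost W N c : Loc tau t lpre x y E S lpost ->
  fe_rule x y E S = (W, N, c) ->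
  (forall v, v \in N -> v != lmax N -> tau v != LL) /\
  (forall v, v \in W -> v != lmax W -> tau v != LL).
Proof.
move=> L; have iE := loc_intE L; have iS := loc_intS L.
case/fe_rule_cases => [[hy hs -> -> _]|[[hx hs -> -> _]|[_ _ -> -> _]]].
- have [nS nE _ lt h] := merge_lo_hi hs iS iE; have [_ mx _] := h _ (memES E S).
  split => // v; rewrite mx mem_cat => /orP [|] hv hn; first exact: (l_nlE L).
  case: (eqVneq v (lmax S)) => [->|hvs]; last exact: (l_nlS L).
  by rewrite -(l_y L nS) hy.
- have [nE nS _ lt h] := merge_lo_hi hs iE iS; have [_ mx _] := h _ (fun v => mem_cat v E S).
  split => // v; rewrite mx mem_cat => /orP [|] hv hn; last exact: (l_nlS L).
  case: (eqVneq v (lmax E)) => [->|hvs]; last exact: (l_nlE L).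
  by rewrite -(l_x L nE) hx.
- split => v hv hn; [exact: (l_nlS L)|exact: (l_nlE L)].
Qed.

Lemma loc_succ tau t lpre x y E S lpost W N c : Loc tau t lpre x y E S lpost ->
  fe_rule x y E S = (W, N, c) ->
  Csucc tau t (flatten lpre) N (W ++ flatten lpost) /\
  Csucc tau t (flatten lpre ++ N) W (flatten lpost).
Proof.
move=> L; have iE := loc_intE L; have iS := loc_intS L.
have cE := l_cE L; have cS := l_cS L.
case/fe_rule_cases => [[hy hs -> -> _]|[[hx hs -> -> _]|[n1 n2 -> -> _]]].
- have [nS nE _ lt h] := merge_lo_hi hs iS iE; have [_ mx _] := h _ (memES E S).
  split; first by rewrite /Csucc eqxx.
  rewrite /Csucc mx cats0 => _ ht; have [a b] := cE nE ht.
  split => // /b; rewrite mem_cat => /orP [/lmax_ge|//]; lia.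
- have [nE nS _ lt h] := merge_lo_hi hs iE iS; have [_ mx _] := h _ (fun v => mem_cat v E S).
  split; last by rewrite /Csucc eqxx.
  rewrite /Csucc mx => _ ht; have [a b] := cS nS ht.
  split => // /a; rewrite mem_cat => /orP [//|/lmax_ge]; lia.
- split.
  + move=> nS ht; have [a b] := cS nS ht; split.
      move=> h0; move: (a h0); rewrite mem_cat => /orP [//|hE]; exfalso.
      have nE : E != [::] by apply/eqP => e; rewrite e in hE.
      have hm : lmin E = (lmax S).+1.
        apply: adj => //; apply/negP => h; exact: (loc_disES L h (lmax_mem nS)).
      move: n1; rewrite (l_y L nS) => /negP; apply.
      apply/andP; split; [by rewrite h0|by rewrite /lsucc nE nS hm eqxx].
    by move/b; rewrite mem_cat => ->; rewrite orbT.
  + move=> nE ht; have [a b] := cE nE ht; split.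
      by move/a; rewrite mem_cat => ->.
    move=> h0; move: (b h0); rewrite mem_cat => /orP [hS|//]; exfalso.
    have nS : S != [::] by apply/eqP => e; rewrite e in hS.
    have hm : lmin S = (lmax E).+1.
      apply: adj => //; apply/negP => h; exact: (loc_disES L (lmax_mem nE) h).
    move: n2; rewrite (l_x L nE) => /negP; apply.
    apply/andP; split; [by rewrite h0|by rewrite /lsucc nE nS hm eqxx].
Qed.

Lemma ne_cat (E S : label) : E != [::] -> E ++ S != [::].
Proof. by case: E. Qed.

Lemma loc_Z x y (E S W N : label) c : fe_rule x y E S = (W, N, c) ->
  ((x == L0) && (E != [::])) + ((y == L0) && (S != [::])) =
    (c == Some SAlpha) + (((y == L0) && (N != [::])) + ((x == L0) && (W != [::]))) /\
  ((x == LH) && (E != [::])) + ((y == LH) && (S != [::])) =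
    (c == Some SBeta) + (((y == LH) && (N != [::])) + ((x == LH) && (W != [::]))).
Proof.
case/fe_rule_cases => [[-> /and3P [nE nS _] -> -> ->]|[[-> /and3P [nS nE _] -> -> ->]|[_ _ -> -> ->]]].
- rewrite (negbTE (ne_cat S nE)) nE nS; case: x => /=; split => //.
- rewrite (negbTE (ne_cat S nE)) nE nS; case: y => /=; split => //.
- split; [rewrite addnC; case: (_ && _) => /=; by case: ifP|
         rewrite addnC; case: (_ && _) => /=; by case: ifP].
Qed.

Lemma AP1_false b1 m X v : v \in flatten X -> b1 < v -> m <= v -> AP (g1 b1) m X = false.
Proof.
move=> hv h1 h2; apply: (AP_false hv) => J _ hJ; have := lmax_ge hJ.
rewrite /g1; split; lia.
Qed.

Lemma AP2_false (t : seq nat) B m X v : (forall J, J \in X -> intv J) ->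
  (forall J u, J \in X -> u \in J -> u \in t) -> B \notin t ->
  v \in flatten X -> 0 < v -> v < B -> m <= v -> AP (g2 B) m X = false.
Proof.
move=> hi ht hB hv h0 h1 h2; apply: (AP_false hv) => J hJX hJ; have := lmax_ge hJ.
have := nostr1 (hi _ hJX) (ht _ ^~ hJX) hB hJ h1.
rewrite /g2 => a b; split; [apply/andP; split|]; lia.
Qed.

Lemma rank_notL0 x y : lrank y < lrank x -> x != L0.
Proof. by case: x; case: y. Qed.
Lemma rank_notLH y x : lrank y < lrank x -> y != LH.
Proof. by case: x; case: y. Qed.
Lemma letH x : x != LL -> x != L0 -> x = LH.
Proof. by case: x. Qed.
Lemma let0 x : x != LL -> x != LH -> x = L0.
Proof. by case: x. Qed.

Lemma nonempty_of_pos (I : label) : 0 < lmax I -> I != [::].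
Proof. by case: I. Qed.

Lemma PhiE g J X : Phi g (J :: X) = (g (lmax J) && AP g (lmax J) X) + Phi g X.
Proof. by []. Qed.
Lemma APE g m J X : AP g m (J :: X) = (g (lmax J) ==> (lmax J < m)) && AP g m X.
Proof. by []. Qed.
Lemma AP0 g m : AP g m [::] = true.
Proof. by []. Qed.

Lemma loc_Phi1 tau t b1 B lpre x y E S lpost W N c : Hyps tau t b1 B ->
  Loc tau t lpre x y E S lpost -> fe_rule x y E S = (W, N, c) ->
  Phi (g1 b1) (N :: W :: lpost) = Phi (g1 b1) (E :: S :: lpost) /\
  forall m, AP (g1 b1) m [:: N; W] = AP (g1 b1) m [:: E; S].
Proof.
move=> H L; have iE := loc_intE L; have iS := loc_intS L.
have cE := l_cE L; have cS := l_cS L; have rk := l_rk L.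
have g0 : g1 b1 0 = false by [].
have key : g1 b1 (lmax E) -> [/\ E != [::], x = LH & (lmax E).+1 \in S ++ flatten lpost].
  rewrite /g1 => hb; have nE : E != [::] by apply: nonempty_of_pos; lia.
  have eT : lmax E \in t := loc_tE L (lmax_mem nE).
  have xe := l_x L nE.
  have xH : x = LH.
    apply: letH; last exact: rank_notL0 rk.
    by rewrite xe (h_b1L H eT hb).
  have tH : tau (lmax E) = LH by rewrite -xe.
  split => //; have [_ b] := cE nE (h_Hs1 H eT hb tH).
  exact: b.
move=> hr; suff: Phi (g1 b1) (N :: W :: lpost) = Phi (g1 b1) (E :: S :: lpost) /\
  (forall m, AP (g1 b1) m [:: N; W] = AP (g1 b1) m [:: E; S]) by [].
move: hr; rewrite !PhiE; rewrite -/(AP _ _ [:: N; W]).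
case/fe_rule_cases => [[hy hs -> -> _]|[[hx hs -> -> _]|[n1 n2 -> -> _]]].
- have [nS nE hm lt h] := merge_lo_hi hs iS iE; have [_ mx _] := h _ (memES E S).
  split; last first.
    move=> m; rewrite !APE AP0 mx lmax_nil g0 /= !andbT.
    apply: AP2_mono => //; rewrite /g1 => hh; exact: ltn_trans hh lt.
  rewrite mx lmax_nil g0 /= ?APE.
  have -> : g1 b1 (lmax S) && AP (g1 b1) (lmax S) lpost = false.
    case hb: (g1 b1 (lmax S)) => //=.
    have hb' : g1 b1 (lmax E) by move: hb; rewrite /g1 => /ltn_trans; apply.
    have [_ _ hv] := key hb'.
    move: hv; rewrite mem_cat => /orP [/lmax_ge|hv]; first lia.
    apply: (AP1_false hv); move: hb'; rewrite /g1; lia.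
  by rewrite lt implybT.
- have [nE nS hm lt h] := merge_lo_hi hs iE iS; have [_ mx _] := h _ (fun v => mem_cat v E S).
  split; last first.
    move=> m; rewrite !APE AP0 mx lmax_nil g0 /= !andbT andbC.
    apply: AP2_mono => //; rewrite /g1 => hh; exact: ltn_trans hh lt.
  rewrite mx lmax_nil g0 /= ?APE.
  have -> : g1 b1 (lmax E) && (((g1 b1 (lmax S)) ==> (lmax S < lmax E)) && AP (g1 b1) (lmax E) lpost) = false.
    case hb: (g1 b1 (lmax E)) => //=.
    have -> : g1 b1 (lmax S) by move: hb; rewrite /g1 => /ltn_trans; apply.
    rewrite /=; case: ltnP => //; lia.
  by [].
- split; last by move=> m; rewrite !APE AP0 !andbT andbC.
  rewrite ?APE.
  case hb: (g1 b1 (lmax E)); last first.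
    rewrite /=; case: (g1 b1 (lmax S) && _) => /=; lia.
  have [nE xH hv] := key hb.
  move: hv; rewrite mem_cat => /orP [hS|hv].
    exfalso; have nS : S != [::] by apply/eqP => e; rewrite e in hS.
    have hm : lmin S = (lmax E).+1.
      apply: adj => //; apply/negP => h; exact: (loc_disES L (lmax_mem nE) h).
    move: n2; rewrite xH /= => /negP; apply; by rewrite /lsucc nE nS hm eqxx.
  have hb' : b1 < (lmax E).+1 by move: hb; rewrite /g1; lia.
  rewrite (AP1_false (m := lmax E) hv hb') // ?andbF /=.
  case hA: (AP (g1 b1) (lmax S) lpost); last by rewrite !andbF /=; lia.
  have lt : lmax E < lmax S.
    case: (ltnP (lmax E).+1 (lmax S)) => h; first lia.
    by rewrite (AP1_false hv hb') in hA.
  rewrite lt /= !andbT; case: (g1 b1 (lmax S)) => /=; lia.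
Qed.

Lemma mem_flatten_rev (X : seq label) v : (v \in flatten (rev X)) = (v \in flatten X).
Proof.
apply/flattenP/flattenP => [] [J hJ hv]; exists J => //; by rewrite ?mem_rev in hJ *.
Qed.

Lemma loc_Phi2 tau t b1 B lpre x y E S lpost W N c : Hyps tau t b1 B ->
  Loc tau t lpre x y E S lpost -> fe_rule x y E S = (W, N, c) ->
  Phi (g2 B) (W :: N :: rev lpre) = Phi (g2 B) (S :: E :: rev lpre) /\
  forall m, AP (g2 B) m [:: W; N] = AP (g2 B) m [:: S; E].
Proof.
move=> H L; have iE := loc_intE L; have iS := loc_intS L.
have cE := l_cE L; have cS := l_cS L; have rk := l_rk L.
have g0 : g2 B 0 = false by [].
have hB := h_B H.
have APf : forall m v, v \in flatten lpre -> 0 < v -> v < B -> m <= v ->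
    AP (g2 B) m (rev lpre) = false.
  move=> m v hv h0 h1 h2; apply: (AP2_false (t := t)) h0 h1 h2 => //.
  - move=> J; rewrite mem_rev; exact: loc_intpre L.
  - move=> J u; rewrite mem_rev; exact: loc_tpre L.
  - by rewrite mem_flatten_rev.
have key : g2 B (lmax S) ->
    [/\ S != [::], y = L0, 0 < (lmax S).+1, (lmax S).+1 < B &
        (lmax S).+1 \in flatten lpre ++ E].
  rewrite /g2 => /andP [h0 hb]; have nS : S != [::] by apply: nonempty_of_pos.
  have sT : lmax S \in t := loc_tS L (lmax_mem nS).
  have ys := l_y L nS.
  have y0 : y = L0.
    apply: let0; last exact: rank_notLH rk.
    by rewrite ys (h_BL H sT hb).
  have t0 : tau (lmax S) = L0 by rewrite -ys.
  have s1 := h_0s2 H sT hb t0.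
  have [a _] := cS nS s1.
  split => //; last exact: a.
  rewrite ltn_neqAle hb andbT; apply/eqP => e; by rewrite e (negbTE hB) in s1.
move=> hr; suff: Phi (g2 B) (W :: N :: rev lpre) = Phi (g2 B) (S :: E :: rev lpre) /\
  (forall m, AP (g2 B) m [:: W; N] = AP (g2 B) m [:: S; E]) by [].
move: hr; rewrite !PhiE.
case/fe_rule_cases => [[hy hs -> -> _]|[[hx hs -> -> _]|[n1 n2 -> -> _]]].
- have [nS nE hm lt h] := merge_lo_hi hs iS iE; have [_ mx _] := h _ (memES E S).
  have gse : g2 B (lmax S) -> g2 B (lmax E).
    rewrite /g2 => /andP [a b]; apply/andP; split; first lia.
    apply: (nostr2 (t := t) (lo := S)) => // u; exact: loc_tE L.
  split; last first.
    move=> m; rewrite !APE AP0 mx lmax_nil g0 /= !andbT andbC.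
    exact: AP2_mono.
  rewrite mx ?lmax_nil ?g0 /= ?APE ?lmax_nil ?g0 /=.
  case hg: (g2 B (lmax S)) => /=; last lia.
  by rewrite (gse hg) /= ltnNge (ltnW lt) /=.
- have [nE nS hm lt h] := merge_lo_hi hs iE iS; have [_ mx _] := h _ (fun v => mem_cat v E S).
  have ges : g2 B (lmax E) -> g2 B (lmax S).
    rewrite /g2 => /andP [a b]; apply/andP; split; first lia.
    apply: (nostr2 (t := t) (lo := E)) => // u; exact: loc_tS L.
  split; last first.
    move=> m; rewrite !APE AP0 mx lmax_nil g0 /= !andbT.
    exact: AP2_mono.
  rewrite mx lmax_nil g0 /= ?APE lt implybT /=.
  case hg: (g2 B (lmax E)) => /=; last lia.
  have [_ _ p0 p1 hv] := key (ges hg).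
  move: hv; rewrite mem_cat => /orP [hv|/lmax_ge]; last lia.
  by rewrite (APf (lmax E) _ hv p0 p1) //=; lia.
- split; last by move=> m; rewrite !APE AP0 !andbT andbC.
  rewrite ?APE.
  case hg: (g2 B (lmax S)); last first.
    rewrite /=; case: (g2 B (lmax E) && _) => /=; lia.
  have [nS y0 p0 p1 hv] := key hg.
  move: hv; rewrite mem_cat => /orP [hv|hE].
  + rewrite (APf (lmax S) _ hv p0 p1) // ?andbF /=.
    case hA: (AP (g2 B) (lmax E) (rev lpre)); last by rewrite !andbF /=; lia.
    have lt : lmax S < lmax E.
      case: (ltnP (lmax S).+1 (lmax E)) => h; first lia.
      by rewrite (APf (lmax E) _ hv p0 p1) in hA.
    rewrite lt /= !andbT; case: (g2 B (lmax E)) => /=; lia.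
  + exfalso; have nE : E != [::] by apply/eqP => e; rewrite e in hE.
    have hm : lmin E = (lmax S).+1.
      apply: adj => //; apply/negP => h; exact: (loc_disES L h (lmax_mem nS)).
    move: n1; rewrite y0 /= => /negP; apply; by rewrite /lsucc nE nS hm eqxx.
Qed.

Lemma flatten_dec (lpre lpost : seq label) (E S : label) :
  flatten (lpre ++ E :: S :: lpost) = flatten lpre ++ E ++ S ++ flatten lpost.
Proof. by rewrite flatten_cat /= catA. Qed.

Lemma mem_dec (lpre lpost : seq label) (E S I : label) :
  (I \in lpre ++ E :: S :: lpost) = [|| I \in lpre, I == E, I == S | I \in lpost].
Proof. by rewrite mem_cat !in_cons. Qed.

Lemma zip_dec (wpre wpost : seq letter) (lpre lpost : seq label) x y E S :
  size wpre = size lpre ->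
  zip (wpre ++ x :: y :: wpost) (lpre ++ E :: S :: lpost) =
  zip wpre lpre ++ (x, E) :: (y, S) :: zip wpost lpost.
Proof. by move=> h; rewrite zip_cat. Qed.

Lemma Inv_Loc tau t b1 B wpre x y wpost lpre E S lpost :
  Hyps tau t b1 B -> Inv tau t (wpre ++ x :: y :: wpost) (lpre ++ E :: S :: lpost) ->
  size wpre = size lpre -> lrank y < lrank x -> Loc tau t lpre x y E S lpost.
Proof.
move=> H I hs rk.
have := i_let I; rewrite zip_dec // all_cat /= => /and4P [_ lx ly _].
have hsucc := succ_ok_drop (i_succ I); rewrite cat0s /= in hsucc.
case: hsucc => cE [cS _].
split => //.
- exact: (i_int I).
- move=> J v hJ hv; rewrite -(perm_mem (i_perm I)); apply/flattenP; by exists J.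
- by rewrite -flatten_dec (perm_uniq (i_perm I)) (h_uniq H).
- by move=> nE; apply/eqP; move: lx; rewrite /letok /= nE.
- by move=> nS; apply/eqP; move: ly; rewrite /letok /= nS.
- apply: (i_nonL I); by rewrite mem_dec eqxx orbT.
- apply: (i_nonL I); by rewrite mem_dec eqxx !orbT.
Qed.

Lemma arith4 (a b c d z p q : nat) : a + b = z + (c + d) ->
  p + (a + (b + q)) = z + (p + (c + (d + q))).
Proof. move=> h; lia. Qed.

Lemma step_dec tau t b1 B wpre x y wpost lpre E S lpost W N c :
  Hyps tau t b1 B -> Inv tau t (wpre ++ x :: y :: wpost) (lpre ++ E :: S :: lpost) ->
  size wpre = size lpre -> lrank y < lrank x -> fe_rule x y E S = (W, N, c) ->
  [/\ Inv tau t (wpre ++ y :: x :: wpost) (lpre ++ N :: W :: lpost),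
   Zc L0 (wpre ++ x :: y :: wpost) (lpre ++ E :: S :: lpost) =
     (c == Some SAlpha) + Zc L0 (wpre ++ y :: x :: wpost) (lpre ++ N :: W :: lpost),
   Zc LH (wpre ++ x :: y :: wpost) (lpre ++ E :: S :: lpost) =
     (c == Some SBeta) + Zc LH (wpre ++ y :: x :: wpost) (lpre ++ N :: W :: lpost),
   Phi (g1 b1) (lpre ++ E :: S :: lpost) = Phi (g1 b1) (lpre ++ N :: W :: lpost) &
   Phi (g2 B) (rev (lpre ++ E :: S :: lpost)) = Phi (g2 B) (rev (lpre ++ N :: W :: lpost))].
Proof.
move=> H I hs rk hr.
have L := Inv_Loc H I hs rk.
have hp := loc_perm hr.
have [iN iW] := loc_int L hr.
have [lN lW] := loc_let L hr.
have [nN nW] := loc_nonL L hr.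
have [sN sW] := loc_succ L hr.
have [z1 z2] := loc_Z hr.
have [p1 a1] := loc_Phi1 H L hr.
have [p2 a2] := loc_Phi2 H L hr.
have memNW : forall v, (v \in N ++ W) = (v \in E ++ S) by apply: perm_mem.
split.
- split.
  + by move: (i_size I); rewrite !size_cat /= => ->.
  + apply: perm_trans (i_perm I).
    by rewrite !flatten_dec perm_cat2l !catA perm_cat2r.
  + move=> J; rewrite mem_dec => /or4P [hJ|/eqP->|/eqP->|hJ] //;
    apply: (i_int I); by rewrite mem_dec ?hJ ?orbT.
  + have hl := i_let I; rewrite zip_dec // all_cat /= in hl.
    rewrite zip_dec // all_cat /=; move: hl => /and4P [-> _ _ ->].
    by rewrite lN lW.
  + move=> J; rewrite mem_dec => /or4P [hJ|/eqP->|/eqP->|hJ] //;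
    apply: (i_nonL I); by rewrite mem_dec ?hJ ?orbT.
  + apply: (succ_ok_replace (i_succ I)).
      rewrite /= => [[_ [_ h]]]; split => //; split => //.
      apply: succ_ok_ext h => v.
      by rewrite -!catA (mem_cat v (flatten lpre)) (mem_cat v (flatten lpre)) memNW.
    move=> v /=.
    by rewrite !catA (mem_cat v (E ++ S)) (mem_cat v (N ++ W)) memNW.
- rewrite /Zc !zip_dec // !count_cat /=; exact: arith4 z1.
- rewrite /Zc !zip_dec // !count_cat /=; exact: arith4 z2.
- apply: Phi_cat_eq => [m|].
    by rewrite -[E :: S :: lpost]/([:: E; S] ++ lpost) -[N :: W :: lpost]/([:: N; W] ++ lpost) !AP_cat a1.
  by rewrite p1.
- rewrite !rev_cat !rev_cons -!cats1 -!catA /=.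
  apply: Phi_cat_eq => [m|]; last by rewrite p2.
  by rewrite -[S :: E :: rev lpre]/([:: S; E] ++ rev lpre) -[W :: N :: rev lpre]/([:: W; N] ++ rev lpre) !AP_cat a2.
Qed.

Lemma decomp (T : Type) (d : T) (s : seq T) p : p.+1 < size s ->
  s = take p s ++ nth d s p :: nth d s p.+1 :: drop p.+2 s.
Proof.
move=> h; have h' : p < size s by apply: ltnW.
by rewrite -{1}(cat_take_drop p s) (drop_nth d h') (drop_nth d h).
Qed.

Lemma set_nth_pre (T : Type) (d : T) pre a l v :
  set_nth d (pre ++ a :: l) (size pre) v = pre ++ v :: l.
Proof. by elim: pre => //= b pre ->. Qed.

Lemma nth_pre (T : Type) (d : T) pre a l : nth d (pre ++ a :: l) (size pre) = a.
Proof. by elim: pre. Qed.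

Lemma set2_dec' (T : Type) (d : T) pre a b post N W p : p = size pre ->
  set_nth d (set_nth d (pre ++ a :: b :: post) p N) p.+1 W = pre ++ N :: W :: post.
Proof.
move=> ->; rewrite set_nth_pre.
have -> : pre ++ N :: b :: post = rcons pre N ++ b :: post by rewrite cat_rcons.
by rewrite -(size_rcons pre N) set_nth_pre cat_rcons.
Qed.

Lemma swap_dec' (T : Type) (d : T) pre a b post p : p = size pre ->
  swap_at d (pre ++ a :: b :: post) p = pre ++ b :: a :: post.
Proof.
move=> hp; rewrite /swap_at set2_dec' //; congr (_ ++ _ :: _ :: _).
- by rewrite hp -cat_rcons -(size_rcons pre a) nth_pre.
- by rewrite hp nth_pre.
Qed.

Lemma swap_dec (T : Type) (d : T) (s : seq T) p : p.+1 < size s ->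
  swap_at d s p = take p s ++ nth d s p.+1 :: nth d s p :: drop p.+2 s.
Proof.
move=> h; rewrite {1}(decomp d h) swap_dec' // size_takel //; lia.
Qed.

Lemma set2_dec (T : Type) (d : T) (s : seq T) p N W : p.+1 < size s ->
  set_nth d (set_nth d s p N) p.+1 W = take p s ++ N :: W :: drop p.+2 s.
Proof.
move=> h; rewrite {1}(decomp d h) set2_dec' // size_takel //; lia.
Qed.

Lemma run tau t b1 B s : forall w lab wf, Hyps tau t b1 B -> Inv tau t w lab ->
  apply_tiles w s = Some wf ->
  exists labf, [/\ Inv tau t wf labf,
    Zc L0 w lab = count_mem (Some SAlpha) (fe_fill w lab s) + Zc L0 wf labf,
    Zc LH w lab = count_mem (Some SBeta) (fe_fill w lab s) + Zc LH wf labf,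
    Phi (g1 b1) lab = Phi (g1 b1) labf &
    Phi (g2 B) (rev lab) = Phi (g2 B) (rev labf)].
Proof.
elim: s => [|p s IH] w lab wf H I /=.
  by case=> <-; exists lab; split.
case hok: (tile_ok w p) => // happ.
move: hok; rewrite /tile_ok => /andP [hsz rk].
have hszl : p.+1 < size lab by rewrite -(i_size I).
case hr: (fe_rule _ _ _ _) => [[W N] c].
have ew := decomp L0 hsz; have el := decomp [::] hszl.
have hs : size (take p w) = size (take p lab) by rewrite !size_takel //; lia.
have I' : Inv tau t (take p w ++ nth L0 w p :: nth L0 w p.+1 :: drop p.+2 w)
    (take p lab ++ nth [::] lab p :: nth [::] lab p.+1 :: drop p.+2 lab).
  by rewrite -ew -el.
have [I2 z1 z2 p1 p2] := step_dec H I' hs rk hr.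
rewrite -ew -el -(swap_dec L0 hsz) -(set2_dec [::] N W hszl) in I2 z1 z2 p1 p2.
have [labf [If zf1 zf2 pf1 pf2]] := IH _ _ _ H I2 happ.
exists labf; split => //.
- by rewrite z1 zf1 /= addnA.
- by rewrite z2 zf2 /= addnA.
- by rewrite p1.
- by rewrite p2.
Qed.

Lemma count_iotaS (f : nat -> bool) m n :
  count f (iota m.+1 n) = count (fun q => f q.+1) (iota m n).
Proof. by elim: n m => //= n IH m; rewrite IH. Qed.

Lemma Phi_pos g X : Phi g X =
  count (fun q => g (lmax (nth [::] X q)) && AP g (lmax (nth [::] X q)) (drop q.+1 X))
    (iota 0 (size X)).
Proof.
elim: X => [|J X IH] //=; rewrite IH count_iotaS drop0; congr (_ + _).
Qed.

Lemma AP_rev g m X : AP g m (rev X) = AP g m X.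
Proof. by rewrite /AP all_rev. Qed.

Lemma Phi_rev_pos g X : Phi g (rev X) =
  count (fun q => g (lmax (nth [::] X q)) && AP g (lmax (nth [::] X q)) (take q X))
    (iota 0 (size X)).
Proof.
elim/last_ind: X => [|X J IH] //.
rewrite rev_rcons PhiE IH AP_rev size_rcons -addn1 iotaD count_cat /= addn0 addnC.
rewrite nth_rcons ltnn eqxx -cats1 take_size_cat //; congr (_ + _).
apply: eq_in_count => q; rewrite mem_iota add0n => /andP [_ hq].
by rewrite nth_cat hq takel_cat // ltnW.
Qed.

Lemma count_zip_pos (A B : Type) (d1 : A) (d2 : B) (P : A * B -> bool) w lab :
  size w = size lab ->
  count P (zip w lab) = count (fun q => P (nth d1 w q, nth d2 lab q)) (iota 0 (size lab)).
Proof.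
elim: w lab => [|a w IH] [|J lab] //= [h]; by rewrite IH // count_iotaS.
Qed.

Lemma mem_flatten_take (X : seq label) q v : v \in flatten (take q X) ->
  exists q', [/\ q' < q, q' < size X & v \in nth [::] X q'].
Proof.
move/flattenP => [J hJ hv]; move/(nthP [::]): hJ => [i hi ei].
move: hi; rewrite size_take_min leq_min => /andP [hi1 hi2].
exists i; split => //; by rewrite -ei nth_take in hv.
Qed.

Lemma mem_flatten_drop (X : seq label) q v : v \in flatten (drop q.+1 X) ->
  exists q', [/\ q < q', q' < size X & v \in nth [::] X q'].
Proof.
move/flattenP => [J hJ hv]; move/(nthP [::]): hJ => [i hi ei].
rewrite size_drop ltn_subRL in hi; exists (q.+1 + i); split => //; first lia.
by rewrite -nth_drop ei.
Qed.

Lemma flatten_take_mem (X : seq label) q q' v : q' < q -> q' < size X ->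
  v \in nth [::] X q' -> v \in flatten (take q X).
Proof.
move=> h1 h2 hv; apply/flattenP; exists (nth [::] X q') => //.
rewrite -(nth_take [::] h1); apply: mem_nth; by rewrite size_take_min leq_min h1 h2.
Qed.

Lemma flatten_drop_mem (X : seq label) q q' v : q < q' -> q' < size X ->
  v \in nth [::] X q' -> v \in flatten (drop q.+1 X).
Proof.
move=> h1 h2 hv; apply/flattenP; exists (nth [::] X q') => //.
have -> : q' = q.+1 + (q' - q.+1) by lia.
rewrite -nth_drop; apply: mem_nth; by rewrite size_drop ltn_subRL subnKC.
Qed.

Lemma flatten_split (X : seq label) q : q < size X ->
  flatten X = flatten (take q X) ++ nth [::] X q ++ flatten (drop q.+1 X).
Proof. by move=> h; rewrite -{1}(cat_take_drop q X) (drop_nth [::]) // flatten_cat. Qed.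

Lemma nth_nw l r k q : q < l + r + k ->
  nth L0 (nseq l L0 ++ nseq r LL ++ nseq k LH) q =
  if q < l then L0 else if q < l + r then LL else LH.
Proof.
move=> h; rewrite nth_cat size_nseq.
case: (ltnP q l) => h1; first by rewrite nth_nseq h1.
rewrite nth_cat size_nseq.
case: (ltnP (q - l) r) => h2.
  have e : q < l + r by lia.
  by rewrite nth_nseq h2 e.
have e1 : q - l - r < k by lia.
have e2 : (q < l + r) = false by apply/negbTE; rewrite -leqNgt; lia.
by rewrite nth_nseq e1 e2.
Qed.

Lemma inv_let tau t w lab q : Inv tau t w lab -> q < size lab ->
  nth [::] lab q != [::] -> nth L0 w q = tau (lmax (nth [::] lab q)).
Proof.
move=> I hq hn; have := i_let I; move/(all_nthP (L0, [::])) => h.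
have := h q; rewrite size_zip -(i_size I) minnn (i_size I) nth_zip ?(i_size I) //.
by move=> /(_ hq); rewrite /letok /= hn => /eqP.
Qed.

Lemma inv_mem tau t w lab q : Inv tau t w lab -> q < size lab -> nth [::] lab q \in lab.
Proof. by move=> I hq; apply: mem_nth. Qed.

Lemma inv_tv tau t w lab v : Inv tau t w lab -> v \in flatten lab -> v \in t.
Proof. by move=> I; rewrite (perm_mem (i_perm I)). Qed.

Lemma inv_tq tau t w lab q v : Inv tau t w lab -> q < size lab ->
  v \in nth [::] lab q -> v \in t.
Proof.
move=> I hq hv; apply: (inv_tv I); apply/flattenP; exists (nth [::] lab q) => //.
exact: mem_nth.
Qed.

Lemma inv_succq tau t w lab q : Inv tau t w lab -> q < size lab ->
  Csucc tau t (flatten (take q lab)) (nth [::] lab q) (flatten (drop q.+1 lab)).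
Proof. by move=> I hq; have := succ_ok_nth (i_succ I) hq; rewrite cat0s. Qed.

Lemma inv_uniq tau t b1 B w lab : Hyps tau t b1 B -> Inv tau t w lab -> uniq (flatten lab).
Proof. by move=> H I; rewrite (perm_uniq (i_perm I)) (h_uniq H). Qed.

Lemma dis_TI tau t b1 B w lab q v : Hyps tau t b1 B -> Inv tau t w lab -> q < size lab ->
  v \in flatten (take q lab) -> v \in nth [::] lab q -> False.
Proof.
move=> H I hq h1 h2; have := inv_uniq H I; rewrite (flatten_split hq) => u.
apply: (uniq_dis u h1); by rewrite mem_cat h2.
Qed.
Lemma dis_TD tau t b1 B w lab q v : Hyps tau t b1 B -> Inv tau t w lab -> q < size lab ->
  v \in flatten (take q lab) -> v \in flatten (drop q.+1 lab) -> False.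
Proof.
move=> H I hq h1 h2; have := inv_uniq H I; rewrite (flatten_split hq) => u.
apply: (uniq_dis u h1); by rewrite mem_cat h2 orbT.
Qed.
Lemma dis_ID tau t b1 B w lab q v : Hyps tau t b1 B -> Inv tau t w lab -> q < size lab ->
  v \in nth [::] lab q -> v \in flatten (drop q.+1 lab) -> False.
Proof.
move=> H I hq h1 h2; have := inv_uniq H I; rewrite (flatten_split hq) => u.
exact: (uniq_dis (uniq_r u) h1 h2).
Qed.

Lemma inv_tD tau t w lab q v : Inv tau t w lab -> v \in flatten (drop q.+1 lab) -> v \in t.
Proof.
move=> I; case/mem_flatten_drop => q' [_ h1 h2]; exact: inv_tq I h1 h2.
Qed.
Lemma inv_tT tau t w lab q v : Inv tau t w lab -> v \in flatten (take q lab) -> v \in t.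
Proof.
move=> I; case/mem_flatten_take => q' [_ h1 h2]; exact: inv_tq I h1 h2.
Qed.

Definition nw (l r k : nat) := nseq l L0 ++ nseq r LL ++ nseq k LH.

Lemma size_nw l r k : size (nw l r k) = l + r + k.
Proof. by rewrite /nw !size_cat !size_nseq addnA. Qed.

Lemma claimAC tau t b1 B l r k lab : Hyps tau t b1 B -> Inv tau t (nw l r k) lab ->
  forall d q, lmax t - lmax (nth [::] lab q) < d -> q < size lab ->
  nth L0 (nw l r k) q = L0 -> nth [::] lab q != [::] ->
  b1 < lmax (nth [::] lab q) /\
  forall v, v \in t -> lmax (nth [::] lab q) < v -> v \in flatten (take q lab).
Proof.
move=> H I; have hsz : size lab = l + r + k by rewrite -(i_size I) size_nw.
elim=> // d IH q hd hq hw hn.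
have bt : lmax (nth [::] lab q) \in t := inv_tq I hq (lmax_mem hn).
have tb : tau (lmax (nth [::] lab q)) = L0 by rewrite -(inv_let I hq hn).
have ql : q < l.
  move: hw; rewrite /nw nth_nw -?hsz //; case: ifP => // _; by case: ifP.
case hb1: ((lmax (nth [::] lab q)).+1 \in t); last first.
  have [a b] := h_0top H bt tb (negbT hb1); split => // v hv hlt.
  by have := b v hv; lia.
have [a _] := inv_succq I hq hn hb1.
case/mem_flatten_take: (a tb) => q' [hq'1 hq'2 hv'].
have nI' : nth [::] lab q' != [::] by apply/eqP => e; rewrite e in hv'.
have ct : lmax (nth [::] lab q') \in t := inv_tq I hq'2 (lmax_mem nI').
have cb := lmax_ge hv'.
have ctb := lmax_ge ct.
have hw' : nth L0 (nw l r k) q' = L0 by rewrite /nw nth_nw -?hsz // ifT //; lia.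
have [hc1 hc2] := IH q' ltac:(lia) hq'2 hw' nI'.
have iI' : intv (nth [::] lab q') := i_int I (mem_nth [::] hq'2).
split.
- case: (ltnP b1 (lmax (nth [::] lab q))) => // hle; exfalso.
  case: (eqVneq (lmax (nth [::] lab q)) b1) => hb.
    by move: tb; rewrite hb (h_b1 H) // -hb.
  have hm : b1 \in nth [::] lab q'.
    rewrite iI' // (leq_trans (lmin_le hv')) /=; lia.
  have b1t : b1 \in t := inv_tq I hq'2 hm.
  have := i_nonL I (mem_nth [::] hq'2) hm ltac:(by rewrite (ltn_eqF hc1)).
  by rewrite (h_b1 H b1t).
- move=> v hv hlt; case: (leqP v (lmax (nth [::] lab q'))) => hvc.
    apply: (flatten_take_mem hq'1 hq'2); rewrite iI' // hvc andbT.
    exact: leq_trans (lmin_le hv') hlt.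
  case/mem_flatten_take: (hc2 v hv hvc) => q'' [h1 h2 h3].
  apply: (flatten_take_mem (q' := q'')) => //; lia.
Qed.

Lemma end1 tau t b1 B l r k lab : Hyps tau t b1 B -> Inv tau t (nw l r k) lab ->
  Zc L0 (nw l r k) lab = Phi (g1 b1) lab.
Proof.
move=> H I; rewrite /Zc (count_zip_pos L0 [::]) ?(i_size I) // Phi_pos.
apply: eq_in_count => q; rewrite mem_iota add0n => /andP [_ hq] /=.
apply/idP/idP.
- move/andP => [/eqP hw hn].
  have [h1 h2] := claimAC H I (leqnn _) hq hw hn.
  rewrite /g1 h1 /=; apply/allP => J hJ; apply/implyP => hg.
  rewrite ltnNge; apply/negP => hge.
  have nJ : J != [::] by apply: nonempty_of_pos; move: hg; rewrite /g1; lia.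
  have hD : lmax J \in flatten (drop q.+1 lab) by apply/flattenP; exists J => //; exact: lmax_mem.
  case: (eqVneq (lmax J) (lmax (nth [::] lab q))) => he.
    apply: (dis_ID H I hq _ hD); rewrite he; apply: lmax_mem hn.
  have hgt : lmax (nth [::] lab q) < lmax J by lia.
  exact: (dis_TD H I hq (h2 _ (inv_tD I hD) hgt) hD).
- move/andP => [hg hA].
  have hn : nth [::] lab q != [::] by apply: nonempty_of_pos; move: hg; rewrite /g1; lia.
  have bt : lmax (nth [::] lab q) \in t := inv_tq I hq (lmax_mem hn).
  rewrite (inv_let I hq hn) hn andbT.
  have nL := h_b1L H bt hg.
  case e: (tau (lmax (nth [::] lab q))) => //; last first.
    by move: nL; rewrite e.
  have [_ b] := inv_succq I hq hn (h_Hs1 H bt hg e).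
  move: hA; rewrite (AP1_false (b e)) //; move: hg; rewrite /g1; lia.
Qed.

Lemma claimB tau t b1 B l r k lab : Hyps tau t b1 B -> Inv tau t (nw l r k) lab ->
  forall d q, lmax t - lmax (nth [::] lab q) < d -> q < size lab ->
  nth L0 (nw l r k) q = LH -> nth [::] lab q != [::] ->
  lmax (nth [::] lab q) < B /\
  forall v, v \in t -> lmax (nth [::] lab q) < v -> v < B -> v \in flatten (drop q.+1 lab).
Proof.
move=> H I; have hsz : size lab = l + r + k by rewrite -(i_size I) size_nw.
elim=> // d IH q hd hq hw hn.
have bt : lmax (nth [::] lab q) \in t := inv_tq I hq (lmax_mem hn).
have tb : tau (lmax (nth [::] lab q)) = LH by rewrite -(inv_let I hq hn).
have ql : l + r <= q.
  move: hw; rewrite /nw nth_nw -?hsz //; case: ifP => // _; case: ifP => // h _; lia.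
case: (h_Hs H bt tb) => [hb1|hB]; last first.
  split; first lia. move=> v _ h1 h2; lia.
have [_ a] := inv_succq I hq hn hb1.
case/mem_flatten_drop: (a tb) => q' [hq'1 hq'2 hv'].
have nI' : nth [::] lab q' != [::] by apply/eqP => e; rewrite e in hv'.
have ct : lmax (nth [::] lab q') \in t := inv_tq I hq'2 (lmax_mem nI').
have cb := lmax_ge hv'.
have ctb := lmax_ge ct.
have hw' : nth L0 (nw l r k) q' = LH.
  rewrite /nw nth_nw -?hsz // ifF; last lia. by rewrite ifF //; lia.
have [hc1 hc2] := IH q' ltac:(lia) hq'2 hw' nI'.
have iI' : intv (nth [::] lab q') := i_int I (mem_nth [::] hq'2).
split; first lia.
move=> v hv hlt hvB; case: (leqP v (lmax (nth [::] lab q'))) => hvc.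
  apply: (flatten_drop_mem hq'1 hq'2); rewrite iI' // hvc andbT.
  exact: leq_trans (lmin_le hv') hlt.
case/mem_flatten_drop: (hc2 v hv hvc hvB) => q'' [h1 h2 h3].
apply: (flatten_drop_mem (q' := q'')) => //; lia.
Qed.

Lemma end2 tau t b1 B l r k lab : Hyps tau t b1 B -> Inv tau t (nw l r k) lab ->
  Zc LH (nw l r k) lab = Phi (g2 B) (rev lab).
Proof.
move=> H I; rewrite /Zc (count_zip_pos L0 [::]) ?(i_size I) // Phi_rev_pos.
apply: eq_in_count => q; rewrite mem_iota add0n => /andP [_ hq] /=.
apply/idP/idP.
- move/andP => [/eqP hw hn].
  have [h1 h2] := claimB H I (leqnn _) hq hw hn.
  have bt : lmax (nth [::] lab q) \in t := inv_tq I hq (lmax_mem hn).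
  rewrite /g2 h1 (h_pos H bt) /=; apply/allP => J hJ; apply/implyP => /andP [hg0 hgB].
  rewrite ltnNge; apply/negP => hge.
  have nJ : J != [::] by apply: nonempty_of_pos.
  have hT : lmax J \in flatten (take q lab) by apply/flattenP; exists J => //; exact: lmax_mem.
  case: (eqVneq (lmax J) (lmax (nth [::] lab q))) => he.
    apply: (dis_TI H I hq hT); rewrite he; apply: lmax_mem hn.
  have hgt : lmax (nth [::] lab q) < lmax J by lia.
  exact: (dis_TD H I hq hT (h2 _ (inv_tT I hT) hgt hgB)).
- move/andP => [/andP [hg0 hgB] hA].
  have hn : nth [::] lab q != [::] by apply: nonempty_of_pos.
  have bt : lmax (nth [::] lab q) \in t := inv_tq I hq (lmax_mem hn).
  rewrite (inv_let I hq hn) hn andbT.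
  have nL := h_BL H bt hgB.
  case e: (tau (lmax (nth [::] lab q))) => //.
    by move: nL; rewrite e.
  have s1 := h_0s2 H bt hgB e.
  have [a _] := inv_succq I hq hn s1.
  have s1B : (lmax (nth [::] lab q)).+1 < B.
    rewrite ltn_neqAle hgB andbT; apply/eqP => e'; by rewrite e' (negbTE (h_B H)) in s1.
  move: hA; rewrite (AP2_false (t := t) _ _ (h_B H) (a e)) //.
  + move=> J /mem_take hJ; exact: i_int I _ hJ.
  + move=> J u /mem_take hJ hu; apply: (inv_tv I); apply/flattenP; by exists J.
Qed.

Lemma last_nonnil (s : seq nat) x y : s != [::] -> last x s = last y s.
Proof. by case: s. Qed.

Lemma rcons_take_last (s : seq nat) : s != [::] -> s = rcons (take (size s).-1 s) (last 0 s).
Proof.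
case: s => // c s _ /=.
have -> : take (size s) (c :: s) = belast c s.
  by rewrite {1}(lastI c s) -cats1 take_size_cat // size_belast.
exact: lastI.
Qed.

Lemma last_flatten (A : seq (seq nat)) : all (fun b => b != [::]) A ->
  last 0 (flatten A) = last 0 (map (last 0) A).
Proof.
elim: A => //= b A IH /andP [nb hA]; rewrite last_cat.
case: A IH hA => [|b' A'] IH hA //=.
move: hA => /= /andP [nb' hA'].
rewrite (last_nonnil _ 0); last exact: ne_cat.
by rewrite IH //= nb' hA'.
Qed.

Lemma sorted_dec_bounds (s : seq nat) : sorted (fun a b => b < a) s ->
  forall y, y \in s -> last 0 s <= y <= head 0 s.
Proof.
elim: s => //= x s IH hp y; rewrite in_cons => /orP [/eqP->|hy].
  apply/andP; split => //.
  have tr : transitive (fun a b : nat => b < a).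
    by move=> a b c h1 h2; exact: ltn_trans h2 h1.
  have hall := order_path_min tr hp.
  case: s hp hall {IH} => //= z s hp /andP [hz hall].
  have := mem_last z s; rewrite in_cons => /orP [/eqP->|hm]; first exact: ltnW.
  by move/allP: hall => /(_ _ hm) /ltnW.
have hs := path_sorted hp; have /andP [h1 h2] := IH hs y hy.
case: s hp hy IH hs h1 h2 => //= z s hp hy IH hs h1 h2.
rewrite h1 /=; move: hp => /= /andP [hz _]; lia.
Qed.

Section Dummy. End Dummy.

Lemma be_sub (A : seq (seq nat)) v : all (fun b => b != [::]) A ->
  v \in block_ends A -> v \in aword A.
Proof.
move=> hA /mapP [b hb ->]; apply/flattenP; exists b => //.
have nb : b != [::] by move/allP: hA => /(_ _ hb).
case: b nb {hb} => // c b _; exact: mem_last.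
Qed.

Lemma tauLL A v : (letter_of A v == LL) = (v \in block_ends A).
Proof. by rewrite /letter_of /is_block_end; case: ifP => //; case: ifP. Qed.

Lemma tauLH A v : (letter_of A v == LH) =
  (v \notin block_ends A) && (v.+1 \in drop (index v (aword A)).+1 (aword A)).
Proof.
rewrite /letter_of /is_increase /is_block_end; case: (v \in block_ends A) => //=.
by case: (v.+1 \in _).
Qed.

Lemma tauL0 A v : (letter_of A v == L0) =
  (v \notin block_ends A) && (v.+1 \notin drop (index v (aword A)).+1 (aword A)).
Proof.
rewrite /letter_of /is_increase /is_block_end; case: (v \in block_ends A) => //=.
by case: (v.+1 \in _).
Qed.

Record AF (n r : nat) (A : seq (seq nat)) : Prop := {
  af_w : aword A = rcons (aword_trunc A) (blast A);
  af_uniq : uniq (aword A);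
  af_memw : forall v, (v \in aword A) = (0 < v <= n.+1);
  af_sizet : size (aword_trunc A) = n;
  af_be : forall v, v \in block_ends A -> v \in aword A;
  af_b1 : bfirst A \in block_ends A;
  af_B : blast A \in block_ends A;
  af_bnd : forall v, v \in block_ends A -> blast A <= v <= bfirst A;
  af_beu : uniq (block_ends A);
  af_bes : size (block_ends A) = r.+1 }.

Lemma AF_of n r A : is_assemblee n.+1 r.+1 A -> AF n r A.
Proof.
move=> /and4P [/eqP sA hne hp hs].
have sw : size (aword A) = n.+1 by rewrite (perm_size hp) size_iota.
have nw : aword A != [::] by rewrite -size_eq0 sw.
have hw : aword A = rcons (aword_trunc A) (blast A).
  by rewrite {1}(rcons_take_last nw) /aword_trunc /blast /block_ends -last_flatten.
have nbe : block_ends A != [::] by rewrite -size_eq0 size_map sA.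
split => //.
- by rewrite (perm_uniq hp) iota_uniq.
- by move=> v; rewrite (perm_mem hp) mem_iota; apply/idP/idP => /andP [a b]; apply/andP; split; lia.
- by rewrite /aword_trunc size_takel sw.
- move=> v; exact: be_sub.
- by rewrite /bfirst; case: (block_ends A) nbe => //= x s _; rewrite in_cons eqxx.
- rewrite /blast; case: (block_ends A) nbe => //= x s _; exact: mem_last.
- exact: sorted_dec_bounds.
- by apply: (sorted_uniq (leT := fun a b => b < a)) hs => [a b c h1 h2|a]; [lia|rewrite ltnn].
- by rewrite size_map sA.
Qed.

Lemma index_t n r A v : AF n r A -> v \in aword_trunc A ->
  index v (aword A) < size (aword_trunc A).
Proof.
move=> F hv; rewrite (af_w F) -cats1 index_cat hv; by rewrite index_mem.
Qed.

Lemma B_right n r A v : AF n r A -> v \in aword_trunc A ->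
  blast A \in drop (index v (aword A)).+1 (aword A).
Proof.
move=> F hv; have hi := index_t F hv.
by rewrite {2}(af_w F) drop_rcons // mem_rcons in_cons eqxx.
Qed.

Lemma Hyps_of n r A : is_assemblee n.+1 r.+1 A ->
  Hyps (letter_of A) (aword_trunc A) (bfirst A) (blast A).
Proof.
move=> hA; have F := AF_of hA.
have hw := af_w F; have hu := af_uniq F.
have ut : uniq (aword_trunc A) /\ blast A \notin aword_trunc A.
  by move: hu; rewrite hw rcons_uniq => /andP [].
have inw : forall v, v \in aword_trunc A -> v \in aword A.
  by move=> v hv; rewrite hw mem_rcons in_cons hv orbT.
have nbe : forall v, v \in aword_trunc A -> letter_of A v != LL -> v \notin block_ends A.
  by move=> v _; rewrite tauLL.
have hHs : forall v, v \in aword_trunc A -> letter_of A v = LH ->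
    v.+1 \in aword_trunc A \/ v.+1 = blast A.
  move=> v hv /eqP; rewrite tauLH => /andP [_ /mem_drop].
  by rewrite hw mem_rcons in_cons => /orP [/eqP->|->]; [right|left].
have b1B : blast A <= bfirst A by have /andP [] := af_bnd F (af_b1 F).
split.
- by case: ut.
- by move=> v /inw; rewrite (af_memw F) => /andP [].
- by case: ut.
- move=> v hv hb; rewrite tauLL; apply/negP => /(af_bnd F) /andP [_ h]; lia.
- move=> v hv hb; rewrite tauLL; apply/negP => /(af_bnd F) /andP [h _]; lia.
- move=> v hv hb hl; case: (hHs v hv hl) => // e; lia.
- move=> v hv hb h0; have := h0; move/eqP; rewrite tauL0 => /andP [hbe hnd].
  have : v.+1 \in aword A.
    rewrite (af_memw F); apply/andP; split => //.
    have := af_memw F (blast A); rewrite (be_sub _ (af_B F)) => [/esym/andP [_ h]|]; first lia.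
    by move: hA => /and4P [].
  rewrite hw mem_rcons in_cons => /orP [/eqP e|//].
  by move: hnd; rewrite e (B_right F hv).
- by move=> _; apply/eqP; rewrite tauLL (af_b1 F).
- exact: hHs.
- move=> v hv h0 hn; have := h0; move/eqP; rewrite tauL0 => /andP [hbe hnd].
  have vw : v \in aword A := inw v hv.
  have hv1 : v.+1 \notin aword A.
    rewrite hw mem_rcons in_cons (negbTE hn) orbF; apply/negP => /eqP e.
    by move: hnd; rewrite e (B_right F hv).
  have vn : v = n.+1.
    move: hv1 vw; rewrite !(af_memw F) /= ltnS => hh /andP [a b].
    by apply/eqP; rewrite eqn_leq b /= ltnNge.
  split.
    have := af_memw F (bfirst A); rewrite (af_be F (af_b1 F)) => /esym /andP [_ h].
    rewrite ltn_neqAle; apply/andP; split; last by rewrite vn.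
    by apply/eqP => e; move: hbe; rewrite -e (af_b1 F).
  by move=> u /inw; rewrite (af_memw F) vn => /andP [].
Qed.

Definition sing (x : nat) : label := [:: x].

Lemma flatten_sing (t : seq nat) : flatten (map sing t) = t.
Proof. by elim: t => //= x t ->. Qed.

Lemma lmax_sing x : lmax [:: x] = x.
Proof. by rewrite /lmax /= maxn0. Qed.

Lemma intv_sing x : intv (sing x).
Proof.
move=> _ v; rewrite /lmin /lmax /= minnn maxn0 in_cons in_nil orbF.
by rewrite eqn_leq andbC.
Qed.

Lemma init_succ n r A q : is_assemblee n.+1 r.+1 A -> q < size (aword_trunc A) ->
  (nth 0 (aword_trunc A) q).+1 \in aword_trunc A ->
  (letter_of A (nth 0 (aword_trunc A) q) = L0 ->
     (nth 0 (aword_trunc A) q).+1 \in take q (aword_trunc A)) /\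
  (letter_of A (nth 0 (aword_trunc A) q) = LH ->
     (nth 0 (aword_trunc A) q).+1 \in drop q.+1 (aword_trunc A)).
Proof.
move=> hA hq ht; have F := AF_of hA.
set t := aword_trunc A in hq ht *; set x := nth 0 t q.
have hw := af_w F.
have sw : size (aword A) = (size t).+1 by rewrite hw size_rcons.
have nx : nth 0 (aword A) q = x by rewrite hw nth_rcons hq.
have ix : index x (aword A) = q.
  by rewrite -nx index_uniq ?(af_uniq F) // sw ltnW.
have tB : blast A \notin t by move: (af_uniq F); rewrite hw rcons_uniq => /andP [].
split.
- move/eqP; rewrite tauL0 ix => /andP [_ hnd].
  have : x.+1 \in aword A by rewrite hw mem_rcons in_cons ht orbT.
  rewrite -(cat_take_drop q (aword A)) (drop_nth 0) ?sw 1?ltnW // nx mem_cat in_cons.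
  rewrite (negbTE hnd) orbF => /orP [h|/eqP h]; last by lia.
  by move: h; rewrite hw -cats1 takel_cat // ltnW.
- move/eqP; rewrite tauLH ix => /andP [_].
  rewrite hw drop_rcons // mem_rcons in_cons => /orP [/eqP e|//].
  by move: tB; rewrite -e ht.
Qed.

Lemma Inv_init n r A : is_assemblee n.+1 r.+1 A ->
  Inv (letter_of A) (aword_trunc A) (XA A) (init_labels A).
Proof.
move=> hA; rewrite /XA /init_labels.
have -> : (fun x => [:: x]) = sing by [].
split.
- by rewrite !size_map.
- by rewrite flatten_sing.
- by move=> J /mapP [x _ ->]; exact: intv_sing.
- by elim: (aword_trunc A) => //= x t ->; rewrite andbT /letok /= ?lmax_sing ?maxn0 eqxx.
- move=> J /mapP [x _ ->] v; rewrite lmax_sing in_cons in_nil orbF => /eqP ->.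
  by rewrite eqxx.
- apply: succ_ok_of_nth => q; rewrite size_map => hq.
  rewrite cat0s -map_take -map_drop !flatten_sing (nth_map 0) //.
  move=> _; rewrite lmax_sing => ht; exact: init_succ hA hq ht.
Qed.

Lemma Zc_init c (tau : nat -> letter) (t : seq nat) :
  Zc c (map tau t) (map sing t) = count_mem c (map tau t).
Proof. rewrite /Zc; elim: t => //= x t IH; by rewrite andbT IH. Qed.

Lemma AP_sing g m (s : seq nat) : AP g m (map sing s) = all (fun y => g y ==> (y < m)) s.
Proof. by rewrite /AP all_map; apply: eq_all => y /=; rewrite ?lmax_sing ?maxn0. Qed.

Lemma iota_w n r A : AF n r A ->
  iota 0 (size (aword A)) = iota 0 (size (aword_trunc A)) ++ [:: size (aword_trunc A)].
Proof. by move=> F; rewrite (af_w F) size_rcons -addn1 iotaD. Qed.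

Lemma Phi1_init n r A : is_assemblee n.+1 r.+1 A ->
  Phi (g1 (bfirst A)) (map sing (aword_trunc A)) = size (lrs A).
Proof.
move=> hA; have F := AF_of hA.
have b1B : blast A <= bfirst A by have /andP [] := af_bnd F (af_b1 F).
rewrite /lrs size_map size_filter Phi_pos size_map (iota_w F) count_cat /=.
have eB : nth 0 (aword A) (size (aword_trunc A)) = blast A.
  by rewrite (af_w F) nth_rcons ltnn eqxx.
rewrite eB (ltnNge (bfirst A) (blast A)) b1B /= !addn0.
apply: eq_in_count => q; rewrite mem_iota add0n => /andP [_ hq].
rewrite (nth_map 0) // lmax_sing (af_w F) nth_rcons hq -map_drop AP_sing drop_rcons // all_rcons.
by rewrite (ltnNge (bfirst A) (blast A)) b1B.
Qed.

Lemma Phi2_init n r A : is_assemblee n.+1 r.+1 A ->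
  Phi (g2 (blast A)) (rev (map sing (aword_trunc A))) = size (rls A).
Proof.
move=> hA; have F := AF_of hA; have H := Hyps_of hA.
rewrite /rls size_map size_filter Phi_rev_pos size_map (iota_w F) count_cat /=.
have eB : nth 0 (aword A) (size (aword_trunc A)) = blast A.
  by rewrite (af_w F) nth_rcons ltnn eqxx.
rewrite eB ltnn /= !addn0.
apply: eq_in_count => q; rewrite mem_iota add0n => /andP [_ hq].
have hq' : q <= size (aword_trunc A) by apply: ltnW.
rewrite (nth_map 0) // lmax_sing (af_w F) nth_rcons hq -map_take AP_sing -cats1 (takel_cat _ hq').
have pos := h_pos H (mem_nth 0 hq).
rewrite /g2 pos /=; congr andb; apply: eq_in_all => y /mem_take /(h_pos H) hy.
by rewrite hy.
Qed.

Lemma count_sub (s be : seq nat) : uniq s -> uniq be -> {subset be <= s} ->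
  count (mem be) s = size be.
Proof.
move=> us ub hsub; rewrite -size_filter; apply: perm_size; apply: uniq_perm => //.
  exact: filter_uniq.
move=> x; rewrite mem_filter; apply/andP/idP => [[]//|h]; split => //; exact: hsub.
Qed.

Lemma countLL n r A : is_assemblee n.+1 r.+1 A -> count_mem LL (XA A) = r.
Proof.
move=> hA; have F := AF_of hA.
rewrite /XA count_map.
have -> : count (preim (letter_of A) (pred1 LL)) (aword_trunc A) =
          count (mem (block_ends A)) (aword_trunc A).
  by apply: eq_count => x /=; rewrite tauLL.
have := count_sub (af_uniq F) (af_beu F) (af_be F).
by rewrite (af_bes F) (af_w F) -cats1 count_cat /= (af_B F) addn0 addn1 => [[]].
Qed.

Lemma count3 (X : seq letter) :
  count_mem L0 X + count_mem LL X + count_mem LH X = size X.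
Proof. by elim: X => //= a X IH; case: a => /=; lia. Qed.

Local Open Scope ring_scope.

Theorem theorem3p2 (n r : nat) (A : seq (seq nat)) (i j : nat) (s : seq nat) :
  (r <= n)%N ->
  is_assemblee n.+1 r.+1 A ->
  size (lrs A) = i ->
  size (rls A) = j ->
  is_tiling (XA A) s ->
  wt_q1 (XA A) (TA A s) = (n%:Z - r%:Z - i%:Z, n%:Z - r%:Z - j%:Z).
Proof.
move=> hrn hA hi hj ht.
have H := Hyps_of hA; have I0 := Inv_init hA; have F := AF_of hA.
move: ht; rewrite /is_tiling => /eqP happ.
have [labf [If z1 z2 p1 p2]] := run H I0 happ.
have If' : Inv (letter_of A) (aword_trunc A) (nw (count_mem L0 (XA A))
   (count_mem LL (XA A)) (count_mem LH (XA A))) labf := If.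
have e1 := end1 H If'; have e2 := end2 H If'.
rewrite /nw_word -/(nw _ _ _) e1 in z1; rewrite /nw_word -/(nw _ _ _) e2 in z2.
have Z1 : Zc L0 (XA A) (init_labels A) = count_mem L0 (XA A) := Zc_init _ _ _.
have Z2 : Zc LH (XA A) (init_labels A) = count_mem LH (XA A) := Zc_init _ _ _.
have P1 : Phi (g1 (bfirst A)) (init_labels A) = size (lrs A) := Phi1_init hA.
have P2 : Phi (g2 (blast A)) (rev (init_labels A)) = size (rls A) := Phi2_init hA.
have cLL := countLL hA.
have c3 := count3 (XA A).
have sX : size (XA A) = n by rewrite /XA size_map (af_sizet F).
rewrite Z1 -p1 P1 hi in z1; rewrite Z2 -p2 P2 hj in z2.
rewrite /wt_q1 /wt /TA /=.
move: z1 z2 cLL c3 sX.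
set a := count_mem L0 (XA A); set b := count_mem LL (XA A); set c := count_mem LH (XA A).
set x := count _ (fe_fill _ _ _); set y := count _ (fe_fill _ _ _).
move=> z1 z2 cLL c3 sX.
congr pair; lia.
Qed.
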